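(* Let $[\xi_1\to\xi_2\to\xi_1]$ be a simple heteroclinic cycle in $\mathbb{R}^4$ with two nodes. Then $\xi_1$ and $\xi_2$ lie in the same one-dimensional linear subspace of $\mathbb{R}^4$.
   Context: Setting: $\dot y=f(y)$ on $\mathbb{R}^4$ with $f$ equivariant under a finite group $\Gamma\subset O(4)$. Each connection $[\xi_j\to\xi_{j+1}]\subset W^u(\xi_j)\cap W^s(\xi_{j+1})$ is a saddle-sink connection in a fixed-point subspace $P_j=\mathrm{Fix}(\Sigma_j)$, $\Sigma_j\subset\Gamma$ an isotropy subgroup, and $L_j=P_{j-1}\cap P_j$. A robust cycle $X\subset\mathbb{R}^4\setminus\{0\}$ is simple if $\dim P_j=2$ for each $j$, $X$ meets each connected component of $L_j\setminus\{0\}$ in at most one point, and the linearizations at its equilibria have no double eigenvalues. *)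

(* Defs.v *)
From Stdlib Require Import Reals Lra List.
Open Scope R_scope.

Inductive I4 : Set := i0 | i1 | i2 | i3.
Definition I4_eq_dec (i j : I4) : {i = j} + {i <> j}.
Proof. decide equality. Defined.

Definition vec := I4 -> R.
Definition mat := I4 -> I4 -> R.

Definition sum4 (F : I4 -> R) : R := F i0 + F i1 + F i2 + F i3.
Definition vzero : vec := fun _ => 0.
Definition vadd (x y : vec) : vec := fun i => x i + y i.
Definition vsub (x y : vec) : vec := fun i => x i - y i.
Definition vscale (a : R) (x : vec) : vec := fun i => a * x i.
Definition vnorm (x : vec) : R := sqrt (sum4 (fun i => x i * x i)).

Definition delta (i j : I4) : R := if I4_eq_dec i j then 1 else 0.
Definition mid : mat := delta.
Definition mapply (A : mat) (x : vec) : vec := fun i => sum4 (fun j => A i j * x j).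
Definition mmul (A B : mat) : mat := fun i j => sum4 (fun k => A i k * B k j).
Definition mtr (A : mat) : mat := fun i j => A j i.

Definition orthogonal (M : mat) : Prop :=
  forall i j, sum4 (fun k => M k i * M k j) = delta i j.

Definition finite_orthogonal_group (G : mat -> Prop) : Prop :=
  (exists l : list mat, forall g, G g <-> In g l) /\
  G mid /\
  (forall g h, G g -> G h -> G (mmul g h)) /\
  (forall g, G g -> G (mtr g)) /\
  (forall g, G g -> orthogonal g).

Definition equivariant (G : mat -> Prop) (f : vec -> vec) : Prop :=
  forall g x, G g -> f (mapply g x) = mapply g (f x).

Definition isotropy_subgroup (G S : mat -> Prop) : Prop :=
  exists x : vec, forall g, S g <-> (G g /\ mapply g x = x).

Definition Fix (S : mat -> Prop) (x : vec) : Prop :=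
  forall g, S g -> mapply g x = x.

Definition dim2 (P : vec -> Prop) : Prop :=
  exists u v : vec,
    (forall a b, vadd (vscale a u) (vscale b v) = vzero -> a = 0 /\ b = 0) /\
    (forall x, P x <-> exists a b, x = vadd (vscale a u) (vscale b v)).

Definition has_derivative (f : vec -> vec) (A : mat) (x : vec) : Prop :=
  forall eps, 0 < eps -> exists dlt, 0 < dlt /\
    forall h, vnorm h < dlt ->
      vnorm (vsub (vsub (f (vadd x h)) (f x)) (mapply A h)) <= eps * vnorm h.

Definition is_C1 (f : vec -> vec) (Df : vec -> mat) : Prop :=
  (forall x, has_derivative f (Df x) x) /\
  (forall i j x eps, 0 < eps -> exists dlt, 0 < dlt /\
     forall y, vnorm (vsub y x) < dlt -> Rabs (Df y i j - Df x i j) < eps).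

Definition is_solution_on (f : vec -> vec) (phi : R -> vec) (D : R -> Prop) : Prop :=
  forall t, D t -> forall i, derivable_pt_lim (fun s => phi s i) t (f (phi t) i).

Definition tends_at_plus_inf (phi : R -> vec) (xi : vec) : Prop :=
  forall eps, 0 < eps -> exists T, forall t, T <= t -> vnorm (vsub (phi t) xi) < eps.

Definition tends_at_minus_inf (phi : R -> vec) (xi : vec) : Prop :=
  forall eps, 0 < eps -> exists T, forall t, t <= T -> vnorm (vsub (phi t) xi) < eps.

Definition Wu (f : vec -> vec) (xi : vec) (x : vec) : Prop :=
  exists phi : R -> vec, phi 0 = x /\ is_solution_on f phi (fun t => t <= 0) /\
    tends_at_minus_inf phi xi.

Definition Ws (f : vec -> vec) (xi : vec) (x : vec) : Prop :=
  exists phi : R -> vec, phi 0 = x /\ is_solution_on f phi (fun t => 0 <= t) /\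
    tends_at_plus_inf phi xi.

Definition saddle_in (A : mat) (P : vec -> Prop) : Prop :=
  exists (u v : vec) (lu lv : R),
    P u /\ P v /\ u <> vzero /\ v <> vzero /\
    mapply A u = vscale lu u /\ mapply A v = vscale lv v /\ 0 < lu /\ lv < 0.

(* sink of the restriction of A to P: every (complex) eigenvalue a + i b of
   A|_P, with eigenvector u + i w (u, w in P, not both zero), has a < 0. *)
Definition sink_in (A : mat) (P : vec -> Prop) : Prop :=
  forall (a b : R) (u w : vec), P u -> P w -> (u <> vzero \/ w <> vzero) ->
    mapply A u = vsub (vscale a u) (vscale b w) ->
    mapply A w = vadd (vscale b u) (vscale a w) ->
    a < 0.

Definition C := (R * R)%type.
Definition C0 : C := (0, 0).
Definition C1 : C := (1, 0).
Definition Cof (r : R) : C := (r, 0).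
Definition Cadd (z w : C) : C := (fst z + fst w, snd z + snd w).
Definition Csub (z w : C) : C := (fst z - fst w, snd z - snd w).
Definition Cmul (z w : C) : C :=
  (fst z * fst w - snd z * snd w, fst z * snd w + snd z * fst w).

Definition det3c (a b c d e f g h k : C) : C :=
  Cadd (Csub (Cmul a (Csub (Cmul e k) (Cmul f h)))
             (Cmul b (Csub (Cmul d k) (Cmul f g))))
       (Cmul c (Csub (Cmul d h) (Cmul e g))).

Definition det4c (M : I4 -> I4 -> C) : C :=
  Cadd (Csub (Cmul (M i0 i0) (det3c (M i1 i1) (M i1 i2) (M i1 i3)
                                    (M i2 i1) (M i2 i2) (M i2 i3)
                                    (M i3 i1) (M i3 i2) (M i3 i3)))
             (Cmul (M i0 i1) (det3c (M i1 i0) (M i1 i2) (M i1 i3)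
                                    (M i2 i0) (M i2 i2) (M i2 i3)
                                    (M i3 i0) (M i3 i2) (M i3 i3))))
       (Csub (Cmul (M i0 i2) (det3c (M i1 i0) (M i1 i1) (M i1 i3)
                                    (M i2 i0) (M i2 i1) (M i2 i3)
                                    (M i3 i0) (M i3 i1) (M i3 i3)))
             (Cmul (M i0 i3) (det3c (M i1 i0) (M i1 i1) (M i1 i2)
                                    (M i2 i0) (M i2 i1) (M i2 i2)
                                    (M i3 i0) (M i3 i1) (M i3 i2)))).

Definition charpoly (A : mat) (z : C) : C :=
  det4c (fun i j => Csub (if I4_eq_dec i j then z else C0) (Cof (A i j))).

(* A has an eigenvalue of algebraic multiplicity >= 2:
   det(zI - A) = (z - l)^2 (z - m1)(z - m2) for some complex l, m1, m2. *)
Definition has_double_eigenvalue (A : mat) : Prop :=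
  exists l m1 m2 : C, forall z : C,
    charpoly A z = Cmul (Cmul (Csub z l) (Csub z l)) (Cmul (Csub z m1) (Csub z m2)).

(* path components; for an open subset of a linear subspace (locally path
   connected) these coincide with the connected components. *)
Definition same_component (S : vec -> Prop) (x y : vec) : Prop :=
  exists gam : R -> vec,
    (forall i, continuity (fun t => gam t i)) /\
    gam 0 = x /\ gam 1 = y /\ (forall t, 0 <= t <= 1 -> S (gam t)).

Definition meets_components_at_most_once (X L : vec -> Prop) : Prop :=
  forall x y, X x -> X y ->
    same_component (fun z => L z /\ z <> vzero) x y -> L x -> x <> vzero -> x = y.

(* [xi1 -> xi2 -> xi1]: the connection [xi1 -> xi2] is Cn1 and lies in
   P1 = Fix(S1); the connection [xi2 -> xi1] is Cn2 and lies in P2 = Fix(S2)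
   (P0 = P2 since indices are taken mod 2);  L1 = P2 ∩ P1, L2 = P1 ∩ P2. *)
Definition robust_cycle2 (G : mat -> Prop) (f : vec -> vec) (Df : vec -> mat)
  (xi1 xi2 : vec) (S1 S2 : mat -> Prop) (Cn1 Cn2 : vec -> Prop) : Prop :=
  f xi1 = vzero /\ f xi2 = vzero /\ xi1 <> xi2 /\
  isotropy_subgroup G S1 /\ isotropy_subgroup G S2 /\
  (exists x, Cn1 x) /\
  (forall x, Cn1 x -> Fix S1 x /\ Wu f xi1 x /\ Ws f xi2 x) /\
  saddle_in (Df xi1) (Fix S1) /\ sink_in (Df xi2) (Fix S1) /\
  (exists x, Cn2 x) /\
  (forall x, Cn2 x -> Fix S2 x /\ Wu f xi2 x /\ Ws f xi1 x) /\
  saddle_in (Df xi2) (Fix S2) /\ sink_in (Df xi1) (Fix S2) /\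
  (forall x, (x = xi1 \/ x = xi2 \/ Cn1 x \/ Cn2 x) -> x <> vzero).

Definition simple_cycle2 (G : mat -> Prop) (f : vec -> vec) (Df : vec -> mat)
  (xi1 xi2 : vec) (S1 S2 : mat -> Prop) (Cn1 Cn2 : vec -> Prop) : Prop :=
  robust_cycle2 G f Df xi1 xi2 S1 S2 Cn1 Cn2 /\
  dim2 (Fix S1) /\ dim2 (Fix S2) /\
  meets_components_at_most_once (fun x => x = xi1 \/ x = xi2 \/ Cn1 x \/ Cn2 x)
    (fun x => Fix S2 x /\ Fix S1 x) /\
  meets_components_at_most_once (fun x => x = xi1 \/ x = xi2 \/ Cn1 x \/ Cn2 x)
    (fun x => Fix S1 x /\ Fix S2 x) /\
  ~ has_double_eigenvalue (Df xi1) /\ ~ has_double_eigenvalue (Df xi2).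

(* Main.v *)
Require Import Defs.
From Stdlib Require Import Reals Lra Psatz FunctionalExtensionality Classical.
Open Scope R_scope.

Definition sumsq (x : vec) : R := sum4 (fun i => x i * x i).
Definition box (p : vec) (r : R) (y : vec) : Prop := forall i, Rabs (y i - p i) < r.

Lemma sumsq_ge0 x : 0 <= sumsq x.
Proof. unfold sumsq, sum4. nra. Qed.

Lemma sumsq_zero x : sumsq x <= 0 -> forall i, x i = 0.
Proof. unfold sumsq, sum4; intros H i; destruct i; nra. Qed.

Lemma coord_le_vnorm x i : Rabs (x i) <= vnorm x.
Proof.
  unfold vnorm. rewrite <- sqrt_Rsqr_abs. apply sqrt_le_1_alt.
  unfold Rsqr, sum4; destruct i; nra.
Qed.

Lemma vnorm_scale k d : vnorm (vscale k d) = Rabs k * vnorm d.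
Proof.
  unfold vnorm, vscale. replace (sum4 (fun i => k * d i * (k * d i)))
    with ((k*k) * sum4 (fun i => d i * d i)) by (unfold sum4; ring).
  rewrite sqrt_mult_alt by nra. f_equal. rewrite <- sqrt_Rsqr_abs. reflexivity.
Qed.

Lemma vnorm_box p r y : 0 < r -> box p r y -> vnorm (vsub y p) < 2 * r.
Proof.
  intros Hr Hb. unfold vnorm. rewrite <- (sqrt_square (2*r)) by lra.
  apply sqrt_lt_1_alt. split. unfold sum4; nra.
  unfold sum4, vsub.
  assert (forall i, (y i - p i) * (y i - p i) < r * r).
  { intros i. specialize (Hb i). apply Rabs_def2 in Hb. nra. }
  pose proof (H i0); pose proof (H i1); pose proof (H i2); pose proof (H i3). nra.
Qed.

Lemma fin4 (Q : I4 -> R -> Prop) :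
  (forall i d d', 0 < d' <= d -> Q i d -> Q i d') ->
  (forall i, exists d, 0 < d /\ Q i d) -> exists d, 0 < d /\ forall i, Q i d.
Proof.
  intros Hm H.
  destruct (H i0) as [a [Ha Qa]]; destruct (H i1) as [b [Hb Qb]];
  destruct (H i2) as [c [Hc Qc]]; destruct (H i3) as [e [He Qe]].
  exists (Rmin (Rmin a b) (Rmin c e)). split.
  { repeat apply Rmin_pos; lra. }
  pose proof (Rmin_l (Rmin a b) (Rmin c e)); pose proof (Rmin_r (Rmin a b) (Rmin c e)).
  pose proof (Rmin_l a b); pose proof (Rmin_r a b); pose proof (Rmin_l c e); pose proof (Rmin_r c e).
  assert (0 < Rmin (Rmin a b) (Rmin c e)) by (repeat apply Rmin_pos; lra).
  intros i; destruct i; [apply (Hm _ a)|apply (Hm _ b)|apply (Hm _ c)|apply (Hm _ e)]; auto; lra.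
Qed.

Lemma dpl_cont F x l : derivable_pt_lim F x l ->
  forall e, 0 < e -> exists d, 0 < d /\ forall t, Rabs (t - x) < d -> Rabs (F t - F x) < e.
Proof.
  intros H e He. destruct (H 1 Rlt_0_1) as [[d Hd] Hd'].
  simpl in Hd'. exists (Rmin d (e / (Rabs l + 1))). split.
  { apply Rmin_pos; auto. apply Rdiv_lt_0_compat; auto. pose proof (Rabs_pos l); lra. }
  intros t Ht. destruct (Req_dec t x) as [->|Hne].
  { replace (F x - F x) with 0 by ring. rewrite Rabs_R0; auto. }
  pose proof (Rmin_l d (e / (Rabs l + 1))); pose proof (Rmin_r d (e / (Rabs l + 1))).
  specialize (Hd' (t - x)). replace (x + (t - x)) with t in Hd' by ring.
  assert (Hh : t - x <> 0) by lra.
  specialize (Hd' Hh ltac:(lra)).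
  assert (Habs: Rabs (F t - F x) <= (Rabs l + 1) * Rabs (t - x)).
  { replace (F t - F x) with (((F t - F x)/(t-x) - l) * (t - x) + l * (t - x)) by (field; auto).
    eapply Rle_trans. apply Rabs_triang. rewrite !Rabs_mult.
    pose proof (Rabs_pos (t-x)). nra. }
  assert (Rabs (t - x) < e / (Rabs l + 1)) by lra.
  pose proof (Rabs_pos l).
  apply Rle_lt_trans with (1 := Habs).
  apply (Rmult_lt_compat_l (Rabs l + 1)) in H2; [|lra].
  replace ((Rabs l + 1) * (e / (Rabs l + 1))) with e in H2 by (field; lra). lra.
Qed.

Lemma abs_sq a : Rabs a * Rabs a = a * a.
Proof. rewrite <- Rabs_mult. apply Rabs_right. nra. Qed.

Lemma sum4_sq a b c e : (Rabs a + Rabs b + Rabs c + Rabs e) * (Rabs a + Rabs b + Rabs c + Rabs e)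
  <= 4 * (a*a + b*b + c*c + e*e).
Proof.
  rewrite <- (abs_sq a), <- (abs_sq b), <- (abs_sq c), <- (abs_sq e).
  set (A := Rabs a); set (B := Rabs b); set (C := Rabs c); set (E := Rabs e).
  assert (4*(A*A+B*B+C*C+E*E) - (A+B+C+E)*(A+B+C+E) = (A-B)*(A-B)+(A-C)*(A-C)+(A-E)*(A-E)+(B-C)*(B-C)+(B-E)*(B-E)+(C-E)*(C-E)) by ring.
  pose proof (Rle_0_sqr (A-B)). pose proof (Rle_0_sqr (A-C)). pose proof (Rle_0_sqr (A-E)). pose proof (Rle_0_sqr (B-C)). pose proof (Rle_0_sqr (B-E)). pose proof (Rle_0_sqr (C-E)). unfold Rsqr in *. lra.
Qed.

Lemma lin_bound (a : I4 -> R) (d : vec) B : (forall j, Rabs (a j) <= B) ->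
  sum4 (fun j => a j * d j) * sum4 (fun j => a j * d j) <= 4 * (B * B) * sumsq d.
Proof.
  intros H. unfold sumsq, sum4.
  assert (Hb : Rabs (a i0 * d i0 + a i1 * d i1 + a i2 * d i2 + a i3 * d i3)
     <= B * (Rabs (d i0) + Rabs (d i1) + Rabs (d i2) + Rabs (d i3))).
  { eapply Rle_trans. apply Rabs_triang. eapply Rle_trans. apply Rplus_le_compat_r. apply Rabs_triang.
    eapply Rle_trans. apply Rplus_le_compat_r. apply Rplus_le_compat_r. apply Rabs_triang.
    rewrite !Rabs_mult.
    pose proof (H i0); pose proof (H i1); pose proof (H i2); pose proof (H i3).
    pose proof (Rabs_pos (d i0)); pose proof (Rabs_pos (d i1)); pose proof (Rabs_pos (d i2)); pose proof (Rabs_pos (d i3)).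
    nra. }
  pose proof (sum4_sq (d i0) (d i1) (d i2) (d i3)).
  set (x := a i0 * d i0 + a i1 * d i1 + a i2 * d i2 + a i3 * d i3) in *.
  set (S := Rabs (d i0) + Rabs (d i1) + Rabs (d i2) + Rabs (d i3)) in *.
  rewrite <- (abs_sq x).
  assert (0 <= Rabs x) by apply Rabs_pos.
  assert (0 <= S) by (unfold S; pose proof (Rabs_pos (d i0)); pose proof (Rabs_pos (d i1)); pose proof (Rabs_pos (d i2)); pose proof (Rabs_pos (d i3)); lra).
  assert (0 <= B) by (pose proof (H i0); pose proof (Rabs_pos (a i0)); lra).
  assert (Rabs x * Rabs x <= (B * S) * (B * S)) by (apply Rmult_le_compat; auto; nra).
  nra.
Qed.

Lemma seg_deriv f Df : (forall x, has_derivative f (Df x) x) ->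
  forall z d s i, derivable_pt_lim (fun s => f (vadd z (vscale s d)) i) s
     (sum4 (fun j => Df (vadd z (vscale s d)) i j * d j)).
Proof.
  intros Hd z d s i eps Heps.
  set (x := vadd z (vscale s d)).
  set (nd := vnorm d).
  assert (Hnd : 0 <= nd) by apply sqrt_pos.
  destruct (Hd x (eps / 2 / (nd + 1))) as [dlt [Hdlt Hdl]].
  { apply Rdiv_lt_0_compat; lra. }
  assert (Hpos : 0 < dlt / (nd + 1)) by (apply Rdiv_lt_0_compat; lra).
  exists (mkposreal _ Hpos). simpl. intros k Hk0 Hk.
  assert (Heq : vadd z (vscale (s + k) d) = vadd x (vscale k d)).
  { apply functional_extensionality; intro j; unfold x, vadd, vscale; ring. }
  rewrite Heq.
  assert (Hn : vnorm (vscale k d) < dlt).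
  { rewrite vnorm_scale. fold nd.
    apply (Rmult_lt_compat_r (nd + 1)) in Hk; [|lra].
    replace (dlt / (nd + 1) * (nd + 1)) with dlt in Hk by (field; lra).
    pose proof (Rabs_pos k). nra. }
  specialize (Hdl _ Hn).
  rewrite vnorm_scale in Hdl. fold nd in Hdl.
  set (L := sum4 (fun j => Df x i j * d j)).
  assert (Hc : Rabs ((f (vadd x (vscale k d)) i - f x i) - k * L) <= eps/2/(nd+1)*(Rabs k*nd)).
  { eapply Rle_trans; [|exact Hdl].
    replace (k*L) with (mapply (Df x) (vscale k d) i) by (unfold mapply, vscale, L, sum4; ring).
    exact (coord_le_vnorm _ i). }
  set (D := f (vadd x (vscale k d)) i - f x i) in *.
  replace ((D / k - L)) with ((D - k * L) / k) by (field; auto).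
  unfold Rdiv. rewrite Rabs_mult, Rabs_inv.
  assert (0 < Rabs k) by (apply Rabs_pos_lt; auto).
  apply (Rmult_lt_reg_r (Rabs k)); auto.
  rewrite Rmult_assoc, Rinv_l by lra. rewrite Rmult_1_r.
  assert (eps / 2 / (nd + 1) * (Rabs k * nd) < eps * Rabs k).
  { replace (eps / 2 / (nd + 1) * (Rabs k * nd)) with ((eps * Rabs k) * (nd / (2 * (nd + 1)))) by (field; lra).
    assert (nd / (2 * (nd + 1)) < 1).
    { apply (Rmult_lt_reg_r (2 * (nd + 1))); [lra|]. unfold Rdiv. rewrite Rmult_assoc, Rinv_l by lra. lra. }
    assert (0 < eps * Rabs k) by nra. nra. }
  lra.
Qed.

Definition LIP (F : vec -> vec) : Prop := forall p, exists rho K, 0 < rho /\ 0 <= K /\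
  forall y z, box p rho y -> box p rho z -> sumsq (vsub (F y) (F z)) <= K * sumsq (vsub y z).

Lemma box_convex p r y z s : box p r y -> box p r z -> 0 <= s <= 1 ->
  box p r (vadd z (vscale s (vsub y z))).
Proof.
  intros Hy Hz Hs i. specialize (Hy i); specialize (Hz i).
  unfold vadd, vscale, vsub.
  apply Rabs_def2 in Hy; apply Rabs_def2 in Hz.
  replace (z i + s * (y i - z i) - p i) with ((1 - s) * (z i - p i) + s * (y i - p i)) by ring.
  destruct Hy, Hz, Hs.
  assert ((1-s)*(z i - p i) <= (1-s)*r) by (apply Rmult_le_compat_l; lra).
  assert ((1-s)*(-r) <= (1-s)*(z i - p i)) by (apply Rmult_le_compat_l; lra).
  assert (s*(y i - p i) <= s*r) by (apply Rmult_le_compat_l; lra).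
  assert (s*(-r) <= s*(y i - p i)) by (apply Rmult_le_compat_l; lra).
  destruct (Req_dec s 0).
  - subst. apply Rabs_def1; nra.
  - assert (s*(y i - p i) < s*r) by (apply Rmult_lt_compat_l; lra).
    assert (s*(-r) < s*(y i - p i)) by (apply Rmult_lt_compat_l; lra).
    apply Rabs_def1; nra.
Qed.

Lemma bound16 (A : mat) i j : Rabs (A i j) <= sum4 (fun i => sum4 (fun j => Rabs (A i j))).
Proof.
  unfold sum4.
  pose proof (Rabs_pos (A i0 i0)); pose proof (Rabs_pos (A i0 i1)); pose proof (Rabs_pos (A i0 i2)); pose proof (Rabs_pos (A i0 i3));
  pose proof (Rabs_pos (A i1 i0)); pose proof (Rabs_pos (A i1 i1)); pose proof (Rabs_pos (A i1 i2)); pose proof (Rabs_pos (A i1 i3));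
  pose proof (Rabs_pos (A i2 i0)); pose proof (Rabs_pos (A i2 i1)); pose proof (Rabs_pos (A i2 i2)); pose proof (Rabs_pos (A i2 i3));
  pose proof (Rabs_pos (A i3 i0)); pose proof (Rabs_pos (A i3 i1)); pose proof (Rabs_pos (A i3 i2)); pose proof (Rabs_pos (A i3 i3)).
  destruct i, j; lra.
Qed.

Lemma lip_C1 f Df : is_C1 f Df -> LIP f.
Proof.
  intros [Hd Hc] p.
  assert (H : exists d, 0 < d /\ forall i j y, vnorm (vsub y p) < d -> Rabs (Df y i j - Df p i j) < 1).
  { apply (fin4 (fun i d => forall j y, vnorm (vsub y p) < d -> Rabs (Df y i j - Df p i j) < 1)).
    { intros i d d' Hd' HQ j y Hy. apply HQ. lra. }
    intros i.
    apply (fin4 (fun j d => forall y, vnorm (vsub y p) < d -> Rabs (Df y i j - Df p i j) < 1)).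
    { intros j d d' Hd' HQ y Hy. apply HQ. lra. }
    intros j. exact (Hc i j p 1 Rlt_0_1). }
  destruct H as [dl [Hdl H]].
  set (B := sum4 (fun i => sum4 (fun j => Rabs (Df p i j))) + 1).
  exists (dl / 2), (16 * (B * B)). split; [lra|]. split; [pose proof (Rle_0_sqr B); unfold Rsqr in *; lra|].
  intros y z Hy Hz.
  set (dv := vsub y z).
  assert (Hcomp : forall i, (f y i - f z i) * (f y i - f z i) <= 4 * (B * B) * sumsq dv).
  { intros i.
    destruct (MVT_cor2 (fun s => f (vadd z (vscale s dv)) i)
                (fun s => sum4 (fun j => Df (vadd z (vscale s dv)) i j * dv j)) 0 1 Rlt_0_1)
      as [c [Hceq Hcr]].
    { intros c _. apply seg_deriv; auto. }
    assert (E1 : vadd z (vscale 1 dv) = y).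
    { apply functional_extensionality; intro k; unfold vadd, vscale, dv, vsub; ring. }
    assert (E0 : vadd z (vscale 0 dv) = z).
    { apply functional_extensionality; intro k; unfold vadd, vscale, dv, vsub; ring. }
    simpl in Hceq. rewrite E1, E0 in Hceq. rewrite Hceq, Rminus_0_r, Rmult_1_r.
    apply lin_bound. intros j.
    assert (Hb : box p (dl/2) (vadd z (vscale c dv))) by (apply box_convex; auto; lra).
    apply vnorm_box in Hb; [|lra].
    specialize (H i j (vadd z (vscale c dv)) ltac:(lra)).
    pose proof (bound16 (Df p) i j). unfold B.
    apply Rabs_def2 in H.
    destruct (Rle_dec 0 (Df (vadd z (vscale c dv)) i j)).
    - rewrite Rabs_right by lra.
      destruct (Rle_dec 0 (Df p i j)); [rewrite Rabs_right in H0 by lra | rewrite Rabs_left in H0 by lra]; lra.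
    - rewrite Rabs_left by lra.
      destruct (Rle_dec 0 (Df p i j)); [rewrite Rabs_right in H0 by lra | rewrite Rabs_left in H0 by lra]; lra. }
  unfold sumsq at 1, sum4. unfold vsub at 1 2 3 4 5 6 7 8.
  pose proof (Hcomp i0); pose proof (Hcomp i1); pose proof (Hcomp i2); pose proof (Hcomp i3).
  fold dv. lra.
Qed.

Lemma dpl_plus f1 f2 x l1 l2 : derivable_pt_lim f1 x l1 -> derivable_pt_lim f2 x l2 ->
  derivable_pt_lim (fun s => f1 s + f2 s) x (l1 + l2).
Proof. intros; exact (derivable_pt_lim_plus f1 f2 x l1 l2 H H0). Qed.
Lemma dpl_minus f1 f2 x l1 l2 : derivable_pt_lim f1 x l1 -> derivable_pt_lim f2 x l2 ->
  derivable_pt_lim (fun s => f1 s - f2 s) x (l1 - l2).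
Proof. intros; exact (derivable_pt_lim_minus f1 f2 x l1 l2 H H0). Qed.
Lemma dpl_mult f1 f2 x l1 l2 : derivable_pt_lim f1 x l1 -> derivable_pt_lim f2 x l2 ->
  derivable_pt_lim (fun s => f1 s * f2 s) x (l1 * f2 x + f1 x * l2).
Proof. intros; exact (derivable_pt_lim_mult f1 f2 x l1 l2 H H0). Qed.
Lemma dpl_scal a f1 x l1 : derivable_pt_lim f1 x l1 ->
  derivable_pt_lim (fun s => a * f1 s) x (a * l1).
Proof. intros; exact (derivable_pt_lim_scal f1 a x l1 H). Qed.
Lemma dpl_expM M x : derivable_pt_lim (fun s => exp (M * s)) x (exp (M * x) * M).
Proof.
  assert (H : derivable_pt_lim (fun s => M * s) x M).
  { pose proof (dpl_scal M id x 1 (derivable_pt_lim_id x)) as D. rewrite Rmult_1_r in D. exact D. }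
  exact (derivable_pt_lim_comp (fun s => M * s) exp x M (exp (M * x)) H (derivable_pt_lim_exp _)).
Qed.

Lemma gbound (g : mat) (v : vec) r i : (forall i j, Rabs (g i j) <= 1) -> (forall j, Rabs (v j) < r) ->
  Rabs (sum4 (fun j => g i j * v j)) < 4 * r.
Proof.
  intros Hg Hv.
  assert (forall j, Rabs (g i j * v j) < r).
  { intros j. rewrite Rabs_mult. pose proof (Hg i j); pose proof (Hv j); pose proof (Rabs_pos (g i j)); pose proof (Rabs_pos (v j)). nra. }
  unfold sum4. eapply Rle_lt_trans. apply Rabs_triang. eapply Rle_lt_trans. apply Rplus_le_compat_r. apply Rabs_triang.
  eapply Rle_lt_trans. apply Rplus_le_compat_r. apply Rplus_le_compat_r. apply Rabs_triang.
  pose proof (H i0); pose proof (H i1); pose proof (H i2); pose proof (H i3). lra.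
Qed.

Section Uniq.
Variables (F : vec -> vec) (g : mat) (phi : R -> vec).
Hypothesis HL : LIP F.
Hypothesis Heq : forall x, F (mapply g x) = mapply g (F x).
Hypothesis Hg : forall i j, Rabs (g i j) <= 1.
Hypothesis Hsol : is_solution_on F phi (fun t => t <= 0).
Hypothesis H0 : forall i, mapply g (phi 0) i = phi 0 i.

Let psi t := vsub (mapply g (phi t)) (phi t).
Let E t := sumsq (psi t).
Let Z t := forall i, psi t i = 0.

Lemma psi_deriv c i : c <= 0 ->
  derivable_pt_lim (fun s => psi s i) c (F (mapply g (phi c)) i - F (phi c) i).
Proof.
  intros Hc. rewrite Heq. unfold psi, vsub, mapply, sum4.
  apply dpl_minus; [|apply Hsol; auto].
  repeat apply dpl_plus; apply dpl_scal; apply Hsol; auto.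
Qed.

Lemma E_deriv c : c <= 0 -> derivable_pt_lim E c
  (sum4 (fun i => 2 * psi c i * (F (mapply g (phi c)) i - F (phi c) i))).
Proof.
  intros Hc. unfold E, sumsq, sum4.
  match goal with |- derivable_pt_lim _ _ ?l => set (L := l) end.
  assert (Hd : forall i, derivable_pt_lim (fun s => psi s i * psi s i) c
     (2 * psi c i * (F (mapply g (phi c)) i - F (phi c) i))).
  { intros i. pose proof (dpl_mult _ _ _ _ _ (psi_deriv c i Hc) (psi_deriv c i Hc)) as D.
    match goal with D : derivable_pt_lim _ _ ?l |- derivable_pt_lim _ _ ?l' => replace l' with l by ring end.
    exact D. }
  unfold L. repeat apply dpl_plus; apply Hd.
Qed.

Lemma psi_cont t i : t <= 0 -> forall e, 0 < e -> exists d, 0 < d /\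
  forall s, Rabs (s - t) < d -> Rabs (psi s i - psi t i) < e.
Proof. intros Ht. apply (dpl_cont (fun s => psi s i) t _ (psi_deriv t i Ht)). Qed.

Lemma LOC tau : tau <= 0 -> Z tau -> exists d, 0 < d /\ forall t, tau - d < t <= tau -> Z t.
Proof.
  intros Htau Hz.
  set (p := phi tau).
  destruct (HL p) as [rho [K [Hrho [HK Hlip]]]].
  destruct (fin4 (fun j d => forall t, Rabs (t - tau) < d -> Rabs (phi t j - phi tau j) < rho / 4)) as [d [Hd Hcont]].
  { intros j a b Hab HQ t Ht. apply HQ. lra. }
  { intros j. apply (dpl_cont (fun s => phi s j) tau _ (Hsol tau Htau j)). lra. }
  exists d. split; auto.
  assert (Hbox : forall t, Rabs (t - tau) < d -> box p rho (phi t) /\ box p rho (mapply g (phi t))).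
  { intros t Ht. split.
    - intros i. specialize (Hcont i t Ht). unfold p. lra.
    - intros i.
      assert (Hp : p i = mapply g p i).
      { specialize (Hz i). unfold psi, vsub in Hz. unfold p. lra. }
      rewrite Hp. unfold mapply.
      replace (sum4 (fun j => g i j * phi t j) - sum4 (fun j => g i j * p j))
        with (sum4 (fun j => g i j * (phi t j - p j))) by (unfold sum4; ring).
      replace rho with (4 * (rho / 4)) by field.
      apply gbound; auto; intros j; apply Hcont; auto. }
  set (M := 1 + K).
  set (h := fun s => E s * exp (M * s)).
  intros t [Ht1 Ht2].
  destruct (Req_dec t tau) as [->|Hne]; auto.
  assert (Htt : t < tau) by lra.
  destruct (MVT_cor2 h (fun c => sum4 (fun i => 2 * psi c i * (F (mapply g (phi c)) i - F (phi c) i)) * exp (M * c)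
                                 + E c * (exp (M * c) * M)) t tau Htt) as [c [Hc1 Hc2]].
  { intros c Hc. unfold h. apply (dpl_mult E (fun s => exp (M * s))). apply E_deriv; lra. apply dpl_expM. }
  assert (Hder : 0 <= sum4 (fun i => 2 * psi c i * (F (mapply g (phi c)) i - F (phi c) i)) * exp (M * c)
                                 + E c * (exp (M * c) * M)).
  { assert (Hb : Rabs (c - tau) < d) by (apply Rabs_def1; lra).
    destruct (Hbox c Hb) as [B1 B2].
    specialize (Hlip _ _ B2 B1).
    pose proof (exp_pos (M * c)).
    set (b := vsub (F (mapply g (phi c))) (F (phi c))) in *.
    fold (psi c) in Hlip. fold (E c) in Hlip.
    replace (sum4 (fun i => 2 * psi c i * (F (mapply g (phi c)) i - F (phi c) i)) * exp (M * c)
               + E c * (exp (M * c) * M))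
      with (exp (M * c) * (sum4 (fun i => 2 * psi c i * b i) + M * E c)) by (unfold b, vsub, sum4; ring).
    apply Rmult_le_pos; [lra|].
    unfold M.
    assert (0 <= sumsq (vadd (psi c) b)) by apply sumsq_ge0.
    assert (sumsq (vadd (psi c) b) = sum4 (fun i => 2 * psi c i * b i) + E c + sumsq b)
      by (unfold E, sumsq, vadd, sum4; ring).
    lra. }
  assert (Hh : h t <= h tau).
  { assert (0 <= h tau - h t); [|lra]. rewrite Hc1. apply Rmult_le_pos; lra. }
  assert (HEt : E tau = 0).
  { unfold E, sumsq, sum4. rewrite !Hz. ring. }
  unfold h in Hh. rewrite HEt, Rmult_0_l in Hh.
  pose proof (exp_pos (M * t)).
  assert (E t <= 0).
  { destruct (Rle_dec (E t) 0); auto.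
    assert (0 < E t * exp (M * t)) by (apply Rmult_lt_0_compat; lra). lra. }
  intros i. apply sumsq_zero; auto.
Qed.

Lemma uniq_all : forall t, t <= 0 -> Z t.
Proof.
  intros t1 Ht1. apply NNPP. intros Hn.
  assert (HZ0 : Z 0) by (intros i; unfold psi, vsub; rewrite H0; ring).
  assert (Ht1' : t1 < 0) by (destruct (Req_dec t1 0) as [->|]; [contradiction|lra]).
  set (Es := fun x => exists tau, x = - tau /\ t1 <= tau <= 0 /\ forall t, tau <= t <= 0 -> Z t).
  destruct (completeness Es) as [m [Hub Hlub]].
  { exists (- t1). intros x [tau [-> [Hta _]]]. lra. }
  { exists 0. exists 0. split; [ring|]. split; [lra|]. intros t Ht. replace t with 0 by lra. auto. }
  assert (Hm0 : 0 <= m). { apply Hub. exists 0. split; [ring|]. split; [lra|]. intros t Ht. replace t with 0 by lra. auto. }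
  assert (Hm1 : m <= - t1). { apply Hlub. intros x [tau [-> [Hta _]]]. lra. }
  set (ts := - m).
  assert (HA : forall t, ts < t <= 0 -> Z t).
  { intros t Ht. apply NNPP. intros HnZ.
    assert (Hup : is_upper_bound Es (- t)).
    { intros x [tau [-> [Hta Hz]]]. destruct (Rle_dec (-tau) (-t)) as [|Hgt]; auto.
      exfalso. apply HnZ. apply Hz. lra. }
    specialize (Hlub _ Hup). unfold ts in Ht. lra. }
  assert (HB : Z ts).
  { destruct (Req_dec ts 0) as [->|Hts]; auto.
    assert (Hts' : ts < 0) by (assert (Hle : ts <= 0) by (unfold ts; lra); destruct (Rle_lt_or_eq_dec _ _ Hle); [auto|contradiction]).
    intros i. apply NNPP. intros Hne.
    assert (Ha : 0 < Rabs (psi ts i)) by (apply Rabs_pos_lt; auto).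
    destruct (psi_cont ts i ltac:(lra) _ Ha) as [d [Hd Hc]].
    set (t := ts + Rmin d (- ts) / 2).
    pose proof (Rmin_l d (- ts)); pose proof (Rmin_r d (- ts)).
    assert (0 < Rmin d (- ts)) by (apply Rmin_pos; lra).
    assert (Hz : psi t i = 0) by (apply HA; unfold t; lra).
    assert (Rabs (t - ts) < d) by (unfold t; rewrite Rabs_right; lra).
    specialize (Hc t H3). rewrite Hz in Hc.
    replace (0 - psi ts i) with (- psi ts i) in Hc by ring. rewrite Rabs_Ropp in Hc. lra. }
  assert (Hts1 : t1 < ts).
  { unfold ts. destruct (Req_dec (-m) t1) as [He|]; [|lra]. exfalso. apply Hn. rewrite <- He. auto. }
  destruct (LOC ts ltac:(unfold ts; lra) HB) as [d [Hd Hloc]].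
  set (tp := Rmax t1 (ts - d / 2)).
  assert (Htp : Es (- tp)).
  { exists tp. split; [ring|]. pose proof (Rmax_l t1 (ts - d/2)); pose proof (Rmax_r t1 (ts - d/2)).
    fold tp in H, H1. split.
    - split; [lra|]. unfold tp. apply Rmax_lub; unfold ts in *; lra.
    - intros t Ht. destruct (Rle_dec t ts).
      + apply Hloc. split; [|lra]. lra.
      + apply HA. lra. }
  specialize (Hub _ Htp).
  assert (tp < ts). { unfold tp. apply Rmax_lub_lt; lra. }
  unfold ts in *. lra.
Qed.

End Uniq.

Lemma orth_bound g : orthogonal g -> forall i j, Rabs (g i j) <= 1.
Proof.
  intros H i j. specialize (H j j). unfold delta in H.
  destruct (I4_eq_dec j j) as [_|C]; [|congruence].
  unfold sum4 in H.
  assert (g i j * g i j <= 1).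
  { destruct i; pose proof (Rle_0_sqr (g i0 j)); pose proof (Rle_0_sqr (g i1 j));
    pose proof (Rle_0_sqr (g i2 j)); pose proof (Rle_0_sqr (g i3 j)); unfold Rsqr in *; lra. }
  rewrite <- abs_sq in H0. pose proof (Rabs_pos (g i j)). nra.
Qed.

Lemma small_zero a : (forall e, 0 < e -> Rabs a < 5 * e) -> a = 0.
Proof.
  intros H. apply NNPP; intros Hn.
  assert (Ha : 0 < Rabs a) by (apply Rabs_pos_lt; auto).
  specialize (H (Rabs a / 5) ltac:(lra)). lra.
Qed.

Lemma fix_limit g phi xi : (forall i j, Rabs (g i j) <= 1) ->
  (forall t, t <= 0 -> forall i, mapply g (phi t) i = phi t i) ->
  tends_at_minus_inf phi xi -> forall i, mapply g xi i = xi i.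
Proof.
  intros Hg Hfix Hlim i.
  assert (mapply g xi i - xi i = 0); [|lra].
  apply small_zero. intros e He.
  destruct (Hlim e He) as [T HT].
  set (t := Rmin T 0).
  assert (Ht : t <= T) by apply Rmin_l. assert (Ht0 : t <= 0) by apply Rmin_r.
  specialize (HT t Ht). specialize (Hfix t Ht0).
  set (w := phi t) in *.
  replace (mapply g xi i - xi i) with (sum4 (fun j => g i j * (xi j - w j)) + (w i - xi i)).
  2:{ rewrite <- (Hfix i). unfold mapply, sum4. ring. }
  assert (Hc : forall j, Rabs (xi j - w j) < e).
  { intros j. pose proof (coord_le_vnorm (vsub w xi) j). change (Rabs (w j - xi j) <= vnorm (vsub w xi)) in H.
    rewrite <- Rabs_Ropp. replace (- (xi j - w j)) with (w j - xi j) by ring. lra. }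
  pose proof (gbound g (fun j => xi j - w j) e i Hg Hc).
  eapply Rle_lt_trans. apply Rabs_triang.
  specialize (Hc i). rewrite <- Rabs_Ropp in Hc. replace (- (xi i - w i)) with (w i - xi i) in Hc by ring.
  lra.
Qed.

Lemma neg_LIP F : LIP F -> LIP (fun x i => - F x i).
Proof.
  intros H p. destruct (H p) as [r [K [Hr [HK Hl]]]]. exists r, K. repeat split; auto.
  intros y z Hy Hz. specialize (Hl y z Hy Hz).
  replace (sumsq (vsub (fun i => - F y i) (fun i => - F z i))) with (sumsq (vsub (F y) (F z)))
    by (unfold sumsq, vsub, sum4; ring). auto.
Qed.

Section Main.
Variables (G : mat -> Prop) (f : vec -> vec) (Df : vec -> mat) (S : mat -> Prop).
Hypothesis HG : finite_orthogonal_group G.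
Hypothesis Heqv : equivariant G f.
Hypothesis HC1 : is_C1 f Df.
Hypothesis HS : isotropy_subgroup G S.

Lemma S_props g : S g -> orthogonal g /\ (forall x, f (mapply g x) = mapply g (f x)).
Proof.
  intros Hg. destruct HS as [x0 Hx0]. apply Hx0 in Hg. destruct Hg as [Gg _].
  destruct HG as [_ [_ [_ [_ Ho]]]]. split; [auto|]. intros x. apply Heqv; auto.
Qed.

Lemma Wu_fix xi x : Fix S x -> Wu f xi x -> Fix S xi.
Proof.
  intros Hx [phi [Hp0 [Hsol Hlim]]] g Hg.
  destruct (S_props g Hg) as [Ho Heq].
  apply functional_extensionality. intro i.
  apply (fix_limit g phi xi (orth_bound g Ho)); auto.
  intros t Ht j.
  pose proof (uniq_all f g phi (lip_C1 f Df HC1) Heq (orth_bound g Ho) Hsol) as U.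
  simpl in U.
  assert (H0 : forall i, mapply g (phi 0) i = phi 0 i) by (intros k; rewrite Hp0, (Hx g Hg); auto).
  specialize (U H0 t Ht j). unfold vsub in U. lra.
Qed.

Lemma Ws_fix xi x : Fix S x -> Ws f xi x -> Fix S xi.
Proof.
  intros Hx [phi [Hp0 [Hsol Hlim]]] g Hg.
  destruct (S_props g Hg) as [Ho Heq].
  apply functional_extensionality. intro i.
  set (F := fun x i => - f x i).
  set (ph := fun t => phi (- t)).
  apply (fix_limit g ph xi (orth_bound g Ho)).
  2:{ intros e He. destruct (Hlim e He) as [T HT]. exists (- T). intros t Ht. apply HT. lra. }
  intros t Ht j.
  assert (HeqF : forall y, F (mapply g y) = mapply g (F y)).
  { intros y. unfold F. rewrite Heq. apply functional_extensionality; intro k. unfold mapply, sum4. ring. }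
  assert (HsolF : is_solution_on F ph (fun t => t <= 0)).
  { intros s Hs k. unfold ph, F.
    assert (Hd : derivable_pt_lim (fun u => - u) s (-1)).
    { pose proof (derivable_pt_lim_opp id s 1 (derivable_pt_lim_id s)) as D. exact D. }
    pose proof (derivable_pt_lim_comp (fun u => - u) (fun u => phi u k) s (-1) _ Hd (Hsol (- s) ltac:(lra) k)) as D.
    replace (- f (phi (- s)) k) with (f (phi (- s)) k * -1) by ring. exact D. }
  pose proof (uniq_all F g ph (neg_LIP f (lip_C1 f Df HC1)) HeqF (orth_bound g Ho) HsolF) as U.
  simpl in U.
  assert (H0 : forall i, mapply g (ph 0) i = ph 0 i).
  { intros k. unfold ph. rewrite Ropp_0, Hp0, (Hx g Hg); auto. }
  specialize (U H0 t Ht j). unfold vsub in U. lra.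
Qed.

End Main.

Theorem mainTheorem2
  (G : mat -> Prop) (f : vec -> vec) (Df : vec -> mat)
  (xi1 xi2 : vec) (S1 S2 : mat -> Prop) (Cn1 Cn2 : vec -> Prop) :
  finite_orthogonal_group G ->
  equivariant G f ->
  is_C1 f Df ->
  simple_cycle2 G f Df xi1 xi2 S1 S2 Cn1 Cn2 ->
  exists u : vec, u <> vzero /\
    (exists a : R, xi1 = vscale a u) /\ (exists b : R, xi2 = vscale b u).
Proof.
  intros HG Heqv HC1 [Hr [_ [_ [_ [Hmc _]]]]].
  destruct Hr as [_ [_ [Hne [HS1 [HS2 [[x1 Hx1] [HC1' [_ [_ [[x2 Hx2] [HC2' [_ [_ Hnz]]]]]]]]]]]]].
  destruct (HC1' x1 Hx1) as [F1 [Wu1 Ws1]].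
  destruct (HC2' x2 Hx2) as [F2 [Wu2 Ws2]].
  assert (A1 : Fix S1 xi1) by exact (Wu_fix G f Df S1 HG Heqv HC1 HS1 xi1 x1 F1 Wu1).
  assert (A2 : Fix S1 xi2) by exact (Ws_fix G f Df S1 HG Heqv HC1 HS1 xi2 x1 F1 Ws1).
  assert (B1 : Fix S2 xi1) by exact (Ws_fix G f Df S2 HG Heqv HC1 HS2 xi1 x2 F2 Ws2).
  assert (B2 : Fix S2 xi2) by exact (Wu_fix G f Df S2 HG Heqv HC1 HS2 xi2 x2 F2 Wu2).
  assert (N1 : xi1 <> vzero) by (apply Hnz; auto).
  destruct (classic (exists a, xi2 = vscale a xi1)) as [[a Ha]|Hna].
  { exists xi1. split; auto. split; [exists 1|exists a; auto].
    apply functional_extensionality; intro i; unfold vscale; ring. }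
  exfalso. apply Hne.
  set (gam := fun t => vadd (vscale (1 - t) xi1) (vscale t xi2)).
  assert (Hlin : forall S, Fix S xi1 -> Fix S xi2 -> forall t, Fix S (gam t)).
  { intros S H1 H2 t g Hg. apply functional_extensionality; intro i.
    specialize (H1 g Hg); specialize (H2 g Hg).
    transitivity ((1 - t) * mapply g xi1 i + t * mapply g xi2 i).
    - unfold gam, mapply, vadd, vscale, sum4; ring.
    - rewrite H1, H2. reflexivity. }
  apply (Hmc xi1 xi2); auto.
  exists gam. split; [|split; [|split]].
  - intros i. unfold gam, vadd, vscale. reg.
  - apply functional_extensionality; intro i; unfold gam, vadd, vscale; ring.
  - apply functional_extensionality; intro i; unfold gam, vadd, vscale; ring.
  - intros t Ht. split; [split; apply Hlin; auto|].
    intros Hz. destruct (Req_dec t 0) as [->|Ht0].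
    + apply N1. rewrite <- Hz. apply functional_extensionality; intro i; unfold gam, vadd, vscale; ring.
    + apply Hna. exists ((t - 1) / t). apply functional_extensionality; intro i.
      assert (Hi : gam t i = 0) by (rewrite Hz; reflexivity).
      unfold gam, vadd, vscale in Hi. unfold vscale. field_simplify_eq; [|auto]. lra.
Qed.
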